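(* Let $\mathcal{A}$ be an additive category. Then $\mathcal{A}$ is Noetherian if and only if every object $A$ of $\mathcal{A}$ has the following property: for every directed set $I$ and every collection of morphisms $\{f_i\colon A_i\to A\mid i\in I\}$ with target $A$ such that $f_i\subseteq f_j$ whenever $i\le j$, there exists $i_0\in I$ with $f_i\subseteq f_{i_0}$ for all $i\in I$.
   Context: For morphisms $f\colon A\to B$ and $f'\colon A'\to B$ in $\mathcal{A}$ one writes $f\subseteq f'$ if there is a morphism $g\colon A\to A'$ with $f=f'\circ g$. A $\mathbb{Z}\mathcal{A}$-module is an additive contravariant functor $\mathcal{A}\to$ abelian groups; it is finitely generated if it is a quotient of a finite direct sum of representables $\mathrm{mor}_{\mathcal{A}}(?,A_j)$. $\mathcal{A}$ is Noetherian if every $\mathbb{Z}\mathcal{A}$-submodule of a finitely generated $\mathbb{Z}\mathcal{A}$-module is finitely generated. *)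

(* Defs.v *)
From HB Require Import structures.
From mathcomp Require Import all_boot all_algebra.
Set Implicit Arguments. Unset Strict Implicit. Unset Printing Implicit Defensive.
Import GRing.Theory.
Local Open Scope ring_scope.

Record AddCat := {
  Obj : Type;
  Hom : Obj -> Obj -> zmodType;
  comp : forall A B C : Obj, Hom B C -> Hom A B -> Hom A C;
  idm : forall A : Obj, Hom A A;
  comp_assoc : forall (A B C D : Obj) (h : Hom C D) (g : Hom B C) (f : Hom A B),
      comp h (comp g f) = comp (comp h g) f;
  comp_id_l : forall (A B : Obj) (f : Hom A B), comp (idm B) f = f;
  comp_id_r : forall (A B : Obj) (f : Hom A B), comp f (idm A) = f;
  comp_addl : forall (A B C : Obj) (g g' : Hom B C) (f : Hom A B),
      comp (g + g') f = comp g f + comp g' f;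
  comp_addr : forall (A B C : Obj) (g : Hom B C) (f f' : Hom A B),
      comp g (f + f') = comp g f + comp g f';
  zero_object : exists Z : Obj, idm Z = 0;
  biproducts : forall A B : Obj, exists (P : Obj) (i1 : Hom A P) (i2 : Hom B P)
      (p1 : Hom P A) (p2 : Hom P B),
      [/\ comp p1 i1 = idm A, comp p2 i2 = idm B,
          comp p1 i2 = 0, comp p2 i1 = 0 &
          comp i1 p1 + comp i2 p2 = idm P]
}.
Arguments comp {a A B C}.
Arguments idm {a}.
Arguments Hom a : clear implicits.

Definition subobj (C : AddCat) (A A' B : Obj C) (f : Hom C A B) (f' : Hom C A' B) :=
  exists g : Hom C A A', f = comp f' g.

Record ZAmod (C : AddCat) := {
  Mob : Obj C -> zmodType;
  Mact : forall A B : Obj C, Hom C A B -> Mob B -> Mob A;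
  Mact_add : forall (A B : Obj C) (f : Hom C A B) (x y : Mob B),
      Mact f (x + y) = Mact f x + Mact f y;
  Mact_addf : forall (A B : Obj C) (f g : Hom C A B) (x : Mob B),
      Mact (f + g) x = Mact f x + Mact g x;
  Mact_id : forall (A : Obj C) (x : Mob A), Mact (idm A) x = x;
  Mact_comp : forall (A B D : Obj C) (f : Hom C A B) (g : Hom C B D) (x : Mob D),
      Mact (comp g f) x = Mact f (Mact g x)
}.
Arguments Mob {C} z.
Arguments Mact {C} z {A B}.

Definition submodule (C : AddCat) (M : ZAmod C) (N : forall A : Obj C, Mob M A -> Prop) :=
  [/\ forall A, N A 0,
      forall A (x y : Mob M A), N A x -> N A y -> N A (x - y) &
      forall A B (f : Hom C A B) (x : Mob M B), N B x -> N A (Mact M f x)].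

(* The submodule N of M is finitely generated: there is a natural additive
   transformation from a finite direct sum of representables
   (+)_{j<n} mor(?, As j) to M whose image is exactly N (i.e. N is a quotient
   of that direct sum). *)
Definition fg_sub (C : AddCat) (M : ZAmod C) (N : forall A : Obj C, Mob M A -> Prop) :=
  exists (n : nat) (As : 'I_n -> Obj C)
         (eta : forall X : Obj C, (forall j : 'I_n, Hom C X (As j)) -> Mob M X),
    [/\ forall X (g h : forall j, Hom C X (As j)),
          eta X (fun j => g j + h j) = eta X g + eta X h,
        forall X Y (f : Hom C Y X) (g : forall j, Hom C X (As j)),
          eta Y (fun j => comp (g j) f) = Mact M f (eta X g) &
        forall X (x : Mob M X), N X x <-> exists g, eta X g = x].

Definition fg_module (C : AddCat) (M : ZAmod C) := @fg_sub C M (fun _ _ => True).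

Definition Noetherian (C : AddCat) :=
  forall M : ZAmod C, fg_module M ->
    forall N, @submodule C M N -> @fg_sub C M N.

Definition directed (I : Type) (le : I -> I -> Prop) :=
  [/\ inhabited I, (forall i, le i i),
      (forall i j k, le i j -> le j k -> le i k) &
      (forall i j, exists k, le i k /\ le j k)].

Definition stabilizes (C : AddCat) (A : Obj C) :=
  forall (I : Type) (le : I -> I -> Prop), directed le ->
  forall (Ai : I -> Obj C) (f : forall i, Hom C (Ai i) A),
    (forall i j, le i j -> subobj (f i) (f j)) ->
    exists i0, forall i, subobj (f i) (f i0).

(* Main.v *)
Require Import Defs.
From mathcomp Require Import all_boot all_algebra.
From Stdlib Require Import FunctionalExtensionality.
Set Implicit Arguments. Unset Strict Implicit. Unset Printing Implicit Defensive.
Import GRing.Theory.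
Local Open Scope ring_scope.
Local Notation Hom := Defs.Hom.
Local Notation comp := Defs.comp.

Section Helpers.
Variable C : AddCat.

Lemma comp0l (A B D : Obj C) (f : Hom C A B) : comp (0 : Hom C B D) f = 0.
Proof.
have H := @comp_addl C _ _ _ (0 : Hom C B D) 0 f; rewrite addr0 in H.
by apply: (addrI (comp (0 : Hom C B D) f)); rewrite addr0 -H.
Qed.

Lemma comp0r (A B D : Obj C) (g : Hom C B D) : comp g (0 : Hom C A B) = 0.
Proof.
have H := @comp_addr C _ _ _ g (0 : Hom C A B) 0; rewrite addr0 in H.
by apply: (addrI (comp g (0 : Hom C A B))); rewrite addr0 -H.
Qed.

Lemma comp_oppr (A B D : Obj C) (g : Hom C B D) (f : Hom C A B) :
  comp g (- f) = - comp g f.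
Proof. by apply/eqP; rewrite -addr_eq0 -comp_addr addNr comp0r. Qed.

Definition castT n (T : 'I_n -> zmodType) (k k' : 'I_n) (x : T k) : T k' :=
  match k =P k' with ReflectT e => eq_rect k T x k' e | ReflectF _ => 0 end.

Arguments castT {n} T k k' x.

Lemma castTE n (T : 'I_n -> zmodType) k (x : T k) : castT T k k x = x.
Proof.
rewrite /castT; case: (k =P k) => [e|/(_ erefl)//].
by rewrite (eq_irrelevance e erefl).
Qed.

Lemma weak_prod n (As : 'I_n -> Obj C) :
  exists (P : Obj C) (pi : forall k, Hom C P (As k)),
    forall Z (t : forall k, Hom C Z (As k)),
      exists h : Hom C Z P, forall k, comp (pi k) h = t k.
Proof.
elim: n As => [|n IH] As.
  case: (zero_object C) => Z0 _.
  exists Z0, (fun k => 0) => Z t; exists 0 => k; by case: k.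
have [P' [pi' Hp']] := IH (fun j => As (lift ord0 j)).
case: (biproducts (As ord0) P') => Q [i1 [i2 [p1 [p2 [H11 H22 H12 H21 _]]]]].
exists Q, (fun k => match unlift ord0 k with
                   | Some j => castT (fun k => Hom C Q (As k)) (lift ord0 j) k (comp (pi' j) p2)
                   | None => castT (fun k => Hom C Q (As k)) ord0 k p1 end).
move=> Z t.
have [h' Hh'] := Hp' Z (fun j => t (lift ord0 j)).
exists (comp i1 (t ord0) + comp i2 h') => k.
case: (unliftP ord0 k) => [j ->|->]; rewrite castTE.
  rewrite -comp_assoc comp_addr !comp_assoc H21 H22 comp0l comp_id_l add0r.
  by rewrite Hh'.
by rewrite comp_addr !comp_assoc H11 H12 comp0l comp_id_l addr0.
Qed.

Definition reprM (A : Obj C) : ZAmod C.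
Proof.
refine (@Build_ZAmod C (fun X => Hom C X A) (fun X Y f x => comp x f) _ _ _ _).
- by move=> *; rewrite comp_addl.
- by move=> *; rewrite comp_addr.
- by move=> *; rewrite comp_id_r.
- by move=> *; rewrite comp_assoc.
Defined.

End Helpers.

Theorem mainTheorem13 (C : AddCat) :
  Noetherian C <-> (forall A : Obj C, stabilizes A).
Proof.
split.
- move=> HN A I le [inh rfl trn up] Ai f Hf.
  pose M := reprM A.
  have fgM : fg_module M.
    exists 1%N, (fun _ => A), (fun X g => g ord0); split => //.
    by move=> X x; split => // _; exists (fun _ => x).
  pose N := fun X (h : Mob M X) => exists i, subobj h (f i).
  have Nsub : submodule N.
    split.
    + move=> X; case: inh => i; exists i; exists 0; by rewrite comp0r.
    + move=> X x y [i [g Eg]] [j [g' Eg']].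
      have [k [ik jk]] := up i j.
      have [a Ea] := Hf _ _ ik; have [b Eb] := Hf _ _ jk.
      exists k; exists (comp a g - comp b g').
      rewrite comp_addr comp_oppr !comp_assoc -Ea -Eb.
      by rewrite -Eg -Eg'.
    + move=> X Y f' x [i [g Eg]]; exists i; exists (comp g f').
      by rewrite /= Eg comp_assoc.
  have [n [As [eta [Hadd Hnat Hchar]]]] := HN M fgM N Nsub.
  have [P [pi Hp]] := weak_prod As.
  have [i0 [g0 E0]] : N P (eta P pi) by apply/Hchar; exists pi.
  exists i0 => i.
  have [t Ht] : exists t, eta (Ai i) t = f i.
    by apply/Hchar; exists i; exists (idm _); rewrite comp_id_r.
  have [h Hh] := Hp _ t.
  exists (comp g0 h); rewrite -Ht.
  have -> : t = (fun k => comp (pi k) h).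
    by apply: functional_extensionality_dep => k; rewrite Hh.
  by rewrite Hnat /= E0 comp_assoc.
- move=> Hst M [n [As [eta [Hadd Hnat Hchar]]]] N [N0 Nsub Nact].
  have [P [pi Hp]] := weak_prod As.
  have eta0 : forall X, eta X (fun _ => 0) = 0.
    move=> X; have H := Hadd X (fun _ => 0) (fun _ => 0).
    have E : (fun j : 'I_n => (0 : Hom C X (As j)) + 0) = (fun _ => 0).
      by apply: functional_extensionality_dep => j; rewrite addr0.
    rewrite E in H.
    by apply: (addrI (eta X (fun _ => 0))); rewrite addr0 -H.
  have Nadd : forall X x y, N X x -> N X y -> N X (x + y).
    move=> X x y Nx Ny.
    have := Nsub X x (0 - y) Nx (Nsub X 0 y (N0 X) Ny).
    by rewrite sub0r opprK.
  pose N' := fun Y (h : Hom C Y P) => N Y (eta Y (fun j => comp (pi j) h)).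
  pose I := {Y : Obj C & {h : Hom C Y P | N' Y h}}.
  pose Ai := fun a : I => projT1 a.
  pose fi := fun a : I => proj1_sig (projT2 a) : Hom C (Ai a) P.
  pose le := fun a b : I => subobj (fi a) (fi b).
  have dir : directed le.
    split.
    + have [h Hh] := Hp P (fun _ => 0).
      have Nh : N' P h.
        rewrite /N'.
        have -> : (fun j => comp (pi j) h) = (fun _ => 0).
          by apply: functional_extensionality_dep => j; rewrite Hh.
        by rewrite eta0.
      exact: (inhabits (existT _ P (exist _ h Nh))).
    + by move=> a; exists (idm _); rewrite comp_id_r.
    + move=> a b c [g Eg] [g' Eg']; exists (comp g' g).
      by rewrite Eg Eg' comp_assoc.
    + move=> [Y [h Nh]] [Y' [h' Nh']].
      case: (biproducts Y Y') => Q [i1 [i2 [p1 [p2 [H11 H22 H12 H21 _]]]]].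
      have Nh'' : N' Q (comp h p1 + comp h' p2).
        rewrite /N'.
        have -> : (fun j => comp (pi j) (comp h p1 + comp h' p2)) =
                  (fun j => comp (comp (pi j) h) p1 + comp (comp (pi j) h') p2).
          by apply: functional_extensionality_dep => j; rewrite comp_addr !comp_assoc.
        rewrite Hadd (Hnat _ _ p1 (fun j => comp (pi j) h)).
        rewrite (Hnat _ _ p2 (fun j => comp (pi j) h')).
        by apply: Nadd; apply: Nact.
      exists (existT _ Q (exist _ _ Nh'')); split.
      * exists i1; rewrite /fi /= comp_addl -!comp_assoc H11 H21.
        by rewrite comp_id_r comp0r addr0.
      * exists i2; rewrite /fi /= comp_addl -!comp_assoc H12 H22.
        by rewrite comp_id_r comp0r add0r.
  have [[Y0 [h0 Nh0]] Hi0] := Hst P I le dir Ai fi (fun _ _ H => H).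
  exists 1%N, (fun _ => Y0), (fun Z g => eta Z (fun j => comp (pi j) (comp h0 (g ord0)))).
  split.
  + move=> X g h /=.
    have -> : (fun j => comp (pi j) (comp h0 (g ord0 + h ord0))) =
              (fun j => comp (pi j) (comp h0 (g ord0)) + comp (pi j) (comp h0 (h ord0))).
      by apply: functional_extensionality_dep => j; rewrite !comp_addr.
    by rewrite Hadd.
  + move=> X Y f g /=; rewrite -Hnat; f_equal.
    by apply: functional_extensionality_dep => j; rewrite !comp_assoc.
  + move=> X x; split.
    * move=> Nx.
      have [t Ht] : exists t, eta X t = x by apply/Hchar.
      have [h Hh] := Hp X t.
      have Eh : (fun j => comp (pi j) h) = t.
        by apply: functional_extensionality_dep => j; rewrite Hh.
      have Nh : N' X h by rewrite /N' Eh Ht.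
      have [g Eg] := Hi0 (existT _ X (exist _ h Nh)).
      exists (fun _ => g) => /=.
      by rewrite /fi /= in Eg; rewrite -Eg Eh.
    * move=> [g <-].
      have -> : (fun j => comp (pi j) (comp h0 (g ord0))) =
                (fun j => comp (comp (pi j) h0) (g ord0)).
        by apply: functional_extensionality_dep => j; rewrite comp_assoc.
      by rewrite Hnat; apply: Nact.
Qed.
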